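(* Let $n\ge 2$. Under optimal play, the Sign Game on the complete graph $K_n$ is won by Player N, with the following exceptions: if Player N is Player 1 and $n=2$, then Player P wins; if Player N is Player 1 and $n=4$, the game is a draw.
   Context: The Sign Game on a finite simple undirected graph $G$: two players, Player P and Player N, alternate turns; the player who moves first is called Player 1 and the other Player 2 (either of P, N may be Player 1). On a turn, a player chooses a vertex of $G$ not yet assigned a value and assigns it $+1$ or $-1$. The game ends when every vertex has been assigned. The score of an edge $uv$ is the product of the values of $u$ and $v$, and the score $s(G)$ of the game is the sum of the scores of all edges. Player P wins if $s(G)>0$, Player N wins if $s(G)<0$, and the game is a draw if $s(G)=0$. ''Under optimal play'' means both players play optimally, each with primary goal of winning and secondary goal of at least drawing; the result (P wins, N wins, or draw) is the outcome of this finite perfect-information game under such play, i.e. the stated player has a strategy guaranteeing that result (and for a draw, each player can guarantee not losing). $K_n$ is the complete graph on $n$ vertices. *)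

(* Defs.v *)
From mathcomp Require Import all_boot all_order all_algebra.
Set Implicit Arguments. Unset Strict Implicit. Unset Printing Implicit Defensive.
Import Order.TTheory GRing.Theory Num.Theory.
Local Open Scope ring_scope.

(* A finite simple graph on vertex set 'I_n is given by an edge relation
   e : rel 'I_n (assumed symmetric and irreflexive where relevant). *)
Definition complete_graph (n : nat) : rel 'I_n := fun i j => i != j.

(* A (partial) assignment: None = not yet assigned,
   Some true = +1, Some false = -1. *)
Definition assignment (n : nat) := {ffun 'I_n -> option bool}.

Definition sign_val (o : option bool) : int :=
  match o with Some true => 1 | Some false => -1 | None => 0 end.

Definition score (n : nat) (e : rel 'I_n) (a : assignment n) : int :=
  \sum_(i < n) \sum_(j < n | ((i < j)%N && e i j)) sign_val (a i) * sign_val (a j).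

Definition assign (n : nat) (a : assignment n) (v : 'I_n) (b : bool) : assignment n :=
  [ffun w => if w == v then Some b else a w].

Definition empty_assignment (n : nat) : assignment n := [ffun => None].

(* Players: true = Player P, false = Player N.
   [can_force e goal me turn k a] : from position [a], with player [turn]
   to move and at most [k] moves remaining, player [me] has a strategy
   guaranteeing that the final score satisfies [goal]. *)
Fixpoint can_force (n : nat) (e : rel 'I_n) (goal : int -> bool)
    (me turn : bool) (k : nat) (a : assignment n) : bool :=
  match k with
  | 0 => goal (score e a)
  | k'.+1 =>
    if [forall v, a v != None] then goal (score e a)
    else if turn == me then
      [exists v, exists b : bool,
          (a v == None) && can_force e goal me (~~ turn) k' (assign a v b)]
    else
      [forall v, forall b : bool,
          (a v == None) ==> can_force e goal me (~~ turn) k' (assign a v b)]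
  end.

(* Player [me] can guarantee [goal] in the full game on [e], where
   [pfirst] says whether Player P is Player 1 (moves first).
   Each move assigns one vertex, so n moves end the game. *)
Definition guarantees (n : nat) (e : rel 'I_n) (pfirst : bool)
    (me : bool) (goal : int -> bool) : bool :=
  can_force e goal me pfirst n (empty_assignment n).

Definition P_wins (n : nat) (e : rel 'I_n) (pfirst : bool) : bool :=
  guarantees e pfirst true (fun s => 0 < s).

Definition N_wins (n : nat) (e : rel 'I_n) (pfirst : bool) : bool :=
  guarantees e pfirst false (fun s => s < 0).

Definition is_draw (n : nat) (e : rel 'I_n) (pfirst : bool) : bool :=
  guarantees e pfirst true (fun s => 0 <= s) &&
  guarantees e pfirst false (fun s => s <= 0).

Arguments P_wins : clear implicits.
Arguments N_wins : clear implicits.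
Arguments is_draw : clear implicits.
Arguments complete_graph : clear implicits.

(* Main.v *)
Require Import Defs.
From mathcomp Require Import all_boot all_order all_algebra zify.
Set Implicit Arguments. Unset Strict Implicit. Unset Printing Implicit Defensive.
Import Order.TTheory GRing.Theory Num.Theory.
Local Open Scope ring_scope.

Definition ssum n (a : assignment n) : int := \sum_(i < n) sign_val (a i).
Definition free n (a : assignment n) : nat := #|[pred v | a v == None]|.

Lemma free_assign n (a : assignment n) v b : a v = None ->
  free a = (free (assign a v b)).+1.
Proof.
move=> av; rewrite /free (cardD1 v) inE av eqxx add1n; congr _.+1.
apply: eq_card => w; rewrite !inE /assign ffunE.
by case: (w == v).
Qed.

Lemma ssum_assign n (a : assignment n) v b : a v = None ->
  ssum (assign a v b) = ssum a + sign_val (Some b).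
Proof.
move=> av; rewrite /ssum (bigD1 v) //= [in RHS](bigD1 v) //= av /= add0r.
rewrite /assign ffunE eqxx addrC; congr (_ + _).
by apply: eq_bigr => i hi; rewrite ffunE (negbTE hi).
Qed.

Lemma full_free n (a : assignment n) : [forall v, a v != None] = (free a == 0%N).
Proof.
rewrite /free; apply/forallP/idP.
- by move=> h; apply/eqP; apply: eq_card0 => v; rewrite !inE (negbTE (h v)).
- move=> /eqP h v; apply/negP => hv.
  by have := card0_eq h v; rewrite !inE hv.
Qed.

Lemma free_empty n : free (empty_assignment n) = n.
Proof.
by rewrite /free (eq_card (B := 'I_n)) ?card_ord // => v; rewrite !inE ffunE.
Qed.

Lemma ssum_empty n : ssum (empty_assignment n) = 0.
Proof. by rewrite /ssum big1 // => i _; rewrite ffunE. Qed.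

Lemma full_sq n (a : assignment n) : [forall v, a v != None] ->
  \sum_(i < n) sign_val (a i) * sign_val (a i) = n%:Z.
Proof.
move=> /forallP h; rewrite (eq_bigr (fun _ => 1)); last first.
  by move=> i _; move: (h i); case: (a i) => // -[] _ /=; rewrite ?mulrNN ?mulr1.
by rewrite sumr_const card_ord natz.
Qed.

Lemma full_par n (a : assignment n) : [forall v, a v != None] ->
  exists t : nat, ssum a = (t%:Z *+ 2 - n%:Z).
Proof.
move=> /forallP h; exists (\sum_(i < n) (a i == Some true))%N.
rewrite /ssum (eq_bigr (fun i => ((a i == Some true)%:Z *+ 2 - 1))); last first.
  by move=> i _; move: (h i); case: (a i) => // -[] _ /=; rewrite ?mulrNN ?mulr1.
rewrite big_split /= sumrN sumr_const card_ord; congr (_ - _); last by rewrite natz.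
by rewrite sumrMnl; congr (_ *+ 2); rewrite -natz natr_sum; apply: eq_bigr => i _; rewrite natz.
Qed.
Lemma score_sq n (a : assignment n) :
  (score (complete_graph n) a) *+ 2 =
   ssum a * ssum a - \sum_(i < n) sign_val (a i) * sign_val (a i).
Proof.
set x := fun i => sign_val (a i).
have E1 : score (complete_graph n) a =
   \sum_(i < n) \sum_(j < n) (if (i < j)%N then x i * x j else 0).
  rewrite /score; apply: eq_bigr => i _; rewrite big_mkcond; apply: eq_bigr => j _.
  rewrite /complete_graph; case: (ltnP i j) => //= h.
  by rewrite (_ : i != j) //; apply/eqP => e; move: h; rewrite e ltnn.
have E2 : ssum a * ssum a = \sum_(i < n) \sum_(j < n) x i * x j.
  by rewrite /ssum big_distrl /=; apply: eq_bigr => i _; rewrite big_distrr.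
have E3 : \sum_(i < n) \sum_(j < n) x i * x j =
   \sum_(i < n) \sum_(j < n) (if (i < j)%N then x i * x j else 0)
 + \sum_(i < n) \sum_(j < n) (if (j < i)%N then x i * x j else 0)
 + \sum_(i < n) \sum_(j < n) (if i == j then x i * x j else 0).
  rewrite -!big_split /=; apply: eq_bigr => i _; rewrite -!big_split /=.
  apply: eq_bigr => j _; case: (ltngtP i j) => h.
  - by rewrite (_ : i == j = false) ?addr0 //; apply/eqP => e; move: h; rewrite e ltnn.
  - by rewrite (_ : i == j = false) ?addr0 ?add0r //; apply/eqP => e; move: h; rewrite e ltnn.
  - by rewrite (_ : i == j) ?add0r //; apply/eqP; apply: val_inj.
have E4 : \sum_(i < n) \sum_(j < n) (if (j < i)%N then x i * x j else 0) =
   \sum_(i < n) \sum_(j < n) (if (i < j)%N then x i * x j else 0).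
  rewrite exchange_big /=; apply: eq_bigr => i _; apply: eq_bigr => j _.
  by rewrite mulrC.
have E5 : \sum_(i < n) \sum_(j < n) (if i == j then x i * x j else 0) =
   \sum_(i < n) x i * x i.
  apply: eq_bigr => i _; rewrite -big_mkcond /=.
  rewrite (eq_bigl (fun j => j == i)); last by move=> j; rewrite eq_sym.
  by rewrite big_pred1_eq.
rewrite E2 E3 E4 E5 E1; rewrite mulr2n; rewrite addrK //.
Qed.
Section G.
Variables (n : nat) (e : rel 'I_n) (goal : int -> bool) (me : bool)
  (Inv : bool -> assignment n -> Prop).
Hypothesis Hend : forall t a, Inv t a -> [forall v, a v != None] -> goal (score e a).
Hypothesis Hme : forall a, Inv me a -> ~~ [forall v, a v != None] ->
  exists v b, a v = None /\ Inv (~~ me) (assign a v b).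
Hypothesis Hopp : forall a v b, Inv (~~ me) a -> a v = None -> Inv me (assign a v b).

Lemma game k : forall t a, (free a <= k)%N -> Inv t a -> can_force e goal me t k a.
Proof.
elim: k => [|k IH] t a hk hI /=.
  by apply: (Hend hI); rewrite full_free; move: hk; rewrite leqn0.
case: ifP => hf; first exact: (Hend hI).
case: eqP => ht.
  subst t; have [v [b [av hI']]] := Hme hI (negbT hf).
  apply/existsP; exists v; apply/existsP; exists b; rewrite av eqxx /=.
  apply: IH hI'; move: hk; rewrite (free_assign b av) ltnS //.
have et : t = ~~ me by case: t me ht hI {hf} => [] [].
rewrite et in hI *.
apply/forallP => v; apply/forallP => b; apply/implyP => /eqP av.
rewrite negbK; apply: IH; last exact: Hopp.
by move: hk; rewrite (free_assign b av) ltnS.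
Qed.
End G.

Lemma parS (t : bool) x : t (+) odd x.+1 = ~~ t (+) odd x.
Proof. by rewrite /=; case: t; case: (odd x). Qed.

Lemma score_full n (a : assignment n) : [forall v, a v != None] ->
  (score (complete_graph n) a) *+ 2 = ssum a * ssum a - n%:Z.
Proof. by move=> h; rewrite score_sq full_sq. Qed.

Definition InvN n (c : bool) (t : bool) (a : assignment n) : Prop :=
  (t (+) odd (free a) = c) /\
  (if t then -1 <= ssum a <= 1 else -2 <= ssum a <= 2).

Lemma N_can n pfirst (goal : int -> bool) :
  (forall (sc s : int) (tt : nat), sc *+ 2 = s * s - n%:Z -> s = tt%:Z *+ 2 - n%:Z ->
     (if pfirst (+) odd n then -1 <= s <= 1 else -2 <= s <= 2) -> goal sc) ->
  guarantees (complete_graph n) pfirst false goal.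
Proof.
move=> H; rewrite /guarantees.
set c := pfirst (+) odd n.
have Hopp : forall (a : assignment n) v b, InvN c (~~ false) a -> a v = None -> InvN c false (assign a v b).
  rewrite /InvN; move=> a v b [h1 h2] av; split.
    by move: h1; rewrite (free_assign b av) parS.
  rewrite (ssum_assign b av); move: h2 => /=; case: b => /= /andP [h3 h4];
  apply/andP; split; lia.
have Hme : forall a : assignment n, InvN c false a -> ~~ [forall v, a v != None] ->
  exists v b, a v = None /\ InvN c (~~ false) (assign a v b).
  rewrite /InvN; move=> a [h1 h2] /forallPn [v /negPn /eqP av].
  exists v, (ssum a < 0); split => //; split.
    by move: h1; rewrite (free_assign (ssum a < 0) av) parS.
  rewrite (ssum_assign _ av); move: h2 => /= /andP [h3 h4].
  case: ltP => h5 /=; apply/andP; split; lia.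
have Hend : forall t (a : assignment n), InvN c t a -> [forall v, a v != None] -> goal (score (complete_graph n) a).
  rewrite /InvN; move=> t a [h1 h2] hf.
  have [tt htt] := full_par hf.
  apply: (H _ _ tt (score_full hf) htt).
  have h0 : free a = 0%N by apply/eqP; rewrite -full_free.
  by move: h1 h2; rewrite h0 /= addbF => ->.
apply: (game Hend Hme Hopp); first by rewrite free_empty.
rewrite /InvN; split; rewrite ?free_empty ?ssum_empty //; by case: (pfirst).
Qed.

Definition InvP n (t : bool) (a : assignment n) : Prop :=
  (t (+) odd (free a) = false) /\
  (if t then (ssum a <= -1 \/ 1 <= ssum a)
   else (ssum a <= -2 \/ 2 <= ssum a \/ (ssum a = 0 /\ free a = n))).

Lemma P_can n (goal : int -> bool) : (0 < n)%N -> ~~ odd n ->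
  (forall (sc s : int), sc *+ 2 = s * s - n%:Z -> (s <= -2 \/ 2 <= s) -> goal sc) ->
  guarantees (complete_graph n) false true goal.
Proof.
move=> hn hodd H; rewrite /guarantees.
have Hopp : forall (a : assignment n) v b, InvP (~~ true) a -> a v = None -> InvP true (assign a v b).
  rewrite /InvP; move=> a v b [h1 h2] av; split.
    by move: h1; rewrite (free_assign b av) parS.
  rewrite (ssum_assign b av); move: h2 => /=; case: b => /= h3; lia.
have Hme : forall a : assignment n, InvP true a -> ~~ [forall v, a v != None] ->
  exists v b, a v = None /\ InvP (~~ true) (assign a v b).
  rewrite /InvP; move=> a [h1 h2] /forallPn [v /negPn /eqP av].
  exists v, (0 < ssum a); split => //; split.
    by move: h1; rewrite (free_assign (0 < ssum a) av) parS.
  rewrite (ssum_assign _ av); move: h2 => /= h3.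
  case: ltP => h5 /=; lia.
have Hend : forall t (a : assignment n), InvP t a -> [forall v, a v != None] -> goal (score (complete_graph n) a).
  rewrite /InvP; move=> t a [h1 h2] hf.
  apply: (H _ _ (score_full hf)).
  have h0 : free a = 0%N by apply/eqP; rewrite -full_free.
  move: h1 h2; rewrite h0 /= addbF => ->.
  move=> [h|[h|[_ h]]]; [by left|by right|].
  by exfalso; lia.
apply: (game Hend Hme Hopp); first by rewrite free_empty.
rewrite /InvP; split; rewrite ?free_empty ?ssum_empty //.
  by move: hodd; case: (odd n).
by right; right.
Qed.

Theorem theorem1 (n : nat) (hn : (2 <= n)%N) (nfirst : bool) :
  (nfirst /\ n = 2%N -> P_wins n (complete_graph n) (~~ nfirst)) /\
  (nfirst /\ n = 4%N -> is_draw n (complete_graph n) (~~ nfirst)) /\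
  (~ (nfirst /\ (n = 2%N \/ n = 4%N)) -> N_wins n (complete_graph n) (~~ nfirst)).
Proof.
have hod := odd_double_half n; rewrite -muln2 in hod.
split; [|split].
- move=> [-> h2]; rewrite /P_wins /=.
  apply: P_can; first by rewrite h2.
    by rewrite h2.
  move=> sc s; rewrite mulr2n h2 => h1 h3; nia.
- move=> [-> h2]; rewrite /is_draw /=; apply/andP; split.
    apply: P_can; first by rewrite h2.
      by rewrite h2.
    move=> sc s; rewrite mulr2n h2 => h1 h3; nia.
  apply: N_can; rewrite h2 /= => sc s tt; rewrite mulr2n => h1 _ /andP [h3 h4]; nia.
- move=> hex; rewrite /N_wins; apply: N_can => sc s tt; rewrite !mulr2n => h1 h2.
  case: nfirst hex; case Ho: (odd n) hod => /= hod hex /andP [h3 h4]; try nia.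
Qed.
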